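(* Let $\Theta$ be a set, let $\ell:\Theta\to\mathbb{R}$ and $R:\Theta\to\mathbb{R}$ be real-valued functions, let $B\ge 1$ be an integer, let $\theta^{(0)},\dots,\theta^{(B)}\in\Theta$ and let $\mu^{(0)},\dots,\mu^{(B)}$ be real numbers. Suppose that for all $k=0,\dots,B-1$, \[ \ell(\theta^{(k+1)}) + \mu^{(k+1)} R(\theta^{(k+1)}) \le \ell(\theta^{(k)}) + \mu^{(k+1)} R(\theta^{(k)}) \quad\text{and}\quad \mu^{(k+1)} > \mu^{(k)}. \] Define \begin{align*} \mathcal{K}_> &= \{k \in \{0,\dots,B-1\}: \ \ell(\theta^{(k+1)}) + \mu^{(k)} R(\theta^{(k+1)})\ge \ell(\theta^{(k)}) + \mu^{(k)} R(\theta^{(k)})\}, \\ \mathcal{K}_< &= \{0,\dots,B-1\} \setminus \mathcal{K}_>,\\ S_> &= \sum_{k \in \mathcal{K}_>} \mu^{(k+1)} \big(R(\theta^{(k)}) - R(\theta^{(k+1)})\big), \\ S_< &= \sum_{k \in \mathcal{K}_<} \mu^{(k)} \big(R(\theta^{(k)}) - R(\theta^{(k+1)})\big). \end{align*} Then \[ \ell(\theta^{(B)}) \le \ell(\theta^{(0)}) + S_> + S_<. \]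
   Context: Here $\ell$ plays the role of an empirical risk and $R$ a (one-dimensional) regularization loss of model parameters $\theta$; $\theta^{(k)}$ and $\mu^{(k)}$ are the model parameter and penalty multiplier at iteration $k$ of a training process minimizing the penalized loss $\ell(\theta)+\mu R(\theta)$. *)

(* Defs.v *)
From HB Require Import structures.
From mathcomp Require Import all_boot all_order all_algebra.
From mathcomp Require Import reals.
Set Implicit Arguments. Unset Strict Implicit. Unset Printing Implicit Defensive.
Import Order.TTheory GRing.Theory Num.Theory.
Local Open Scope ring_scope.

(* Main.v *)
Require Import Defs.
From HB Require Import structures.
From mathcomp Require Import all_boot all_order all_algebra.
From mathcomp Require Import reals.
From mathcomp Require Import lra.
Import Order.TTheory GRing.Theory Num.Theory.
Local Open Scope ring_scope.

Theorem corollary2 (R : realType) (Theta : Type)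
  (ell Rg : Theta -> R) (B : nat) (theta : nat -> Theta) (mu : nat -> R) :
  (1 <= B)%N ->
  (forall k : nat, (k < B)%N ->
     ell (theta k.+1) + mu k.+1 * Rg (theta k.+1)
       <= ell (theta k) + mu k.+1 * Rg (theta k)) ->
  (forall k : nat, (k < B)%N -> mu k < mu k.+1) ->
  let Kgt := fun k : nat =>
    ell (theta k.+1) + mu k * Rg (theta k.+1)
      >= ell (theta k) + mu k * Rg (theta k) in
  let Sgt := \sum_(0 <= k < B | Kgt k)
               mu k.+1 * (Rg (theta k) - Rg (theta k.+1)) in
  let Slt := \sum_(0 <= k < B | ~~ Kgt k)
               mu k * (Rg (theta k) - Rg (theta k.+1)) in
  ell (theta B) <= ell (theta 0%N) + Sgt + Slt.
Proof.
move=> _ H1 _; cbv zeta.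
pose Kgt := fun k : nat =>
    ell (theta k.+1) + mu k * Rg (theta k.+1)
      >= ell (theta k) + mu k * Rg (theta k).
rewrite -addrA.
suff: forall n, (n <= B)%N -> ell (theta n) <= ell (theta 0%N) +
  (\sum_(0 <= k < n | Kgt k) mu k.+1 * (Rg (theta k) - Rg (theta k.+1)) +
   \sum_(0 <= k < n | ~~ Kgt k) mu k * (Rg (theta k) - Rg (theta k.+1))).
  by move=> /(_ B (leqnn B)).
elim=> [|n IH] Hn.
  by rewrite !big_geq // !addr0.
have Hk : (n < B)%N by [].
have := IH (ltnW Hn).
rewrite !(big_mkcond (fun k => Kgt k)) !(big_mkcond (fun k => ~~ Kgt k)) /=.
rewrite !big_nat_recr //=.
have := H1 n Hk.
case: ifP => Hg /=.
  move=> Ha Hb.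
  have key : ell (theta n.+1) <= ell (theta n) + mu n.+1 * (Rg (theta n) - Rg (theta n.+1)).
    move: Ha; rewrite mulrBr.
    move: (ell (theta n.+1)) (ell (theta n)) (mu n.+1 * Rg (theta n)) (mu n.+1 * Rg (theta n.+1)) => a b c d H; lra.
  move: Hb key; rewrite addr0.
  move: (\sum_(0 <= i < n) _) (\sum_(0 <= i < n) _) (ell (theta n.+1)) (ell (theta n)) (ell (theta 0%N)) (mu n.+1 * _) => a b c d e f; clear; lra.
move: Hg; rewrite /Kgt => /negbT; rewrite -ltNge => Hg Ha Hb.
have key : ell (theta n.+1) <= ell (theta n) + mu n * (Rg (theta n) - Rg (theta n.+1)).
  move: Hg; rewrite mulrBr.
  move: (ell (theta n.+1)) (ell (theta n)) (mu n * Rg (theta n)) (mu n * Rg (theta n.+1)) => a b c d H; lra.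
move: Hb key; rewrite addr0.
move: (\sum_(0 <= i < n) _) (\sum_(0 <= i < n) _) (ell (theta n.+1)) (ell (theta n)) (ell (theta 0%N)) (mu n * _) => a b c d e f; clear; lra.
Qed.
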